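(* Let $\mathbb{E}$ be a finitely complete category, $\Sigma$ a fibrational class of split epimorphisms, and suppose $\mathbb{E}$ is a $\Sigma$-Mal'tsev category. If a monomorphism $m\colon U\rightarrowtail X$ is normal to a $\Sigma$-equivalence relation $S$ on $X$, then the object $U$ is $\Sigma$-special. If moreover $\mathbb{E}$ is $\Sigma$-protomodular, then a monomorphism $m$ is normal to at most one $\Sigma$-equivalence relation.
   Context: A split epimorphism is a pair $(f,s)$ with $fs=1$. A class $\Sigma$ of split epimorphisms is fibrational if it contains all split epimorphisms $(f,s)$ with $f$ invertible and is stable under pullback along any morphism. A pair of morphisms with common codomain $Z$ is jointly extremally epic if it factors jointly through no non-invertible monomorphism into $Z$. $\mathbb{E}$ is $\Sigma$-Mal'tsev if for every split epimorphism $(f,s)\colon X\rightleftarrows Y$ in $\Sigma$ and every split epimorphism $(g,t)$ with $g\colon Y'\to Y$, letting $X'=Y'\times_YX$, $s'=(1_{Y'},sg)$, $\bar t=(tf,1_X)$, the pair $(s',\bar t)$ is jointly extremally epic. A $\Sigma$-relation is a reflexive relation $(d_0,d_1)\colon S\rightarrowtail X\times X$ with reflexivity $s_0$ such that $(d_0,s_0)\in\Sigma$; a $\Sigma$-equivalence relation is an equivalence relation which is a $\Sigma$-relation. An object $U$ is $\Sigma$-special when the kernel relation of $U\to 1$, namely $U\times U$ with its projections and the diagonal, is a $\Sigma$-relation. A monomorphism $m\colon U\rightarrowtail X$ is normal to an equivalence relation $S$ on $X$ when $m^{-1}(S)=U\times U$ (the indiscrete relation) and both commutative squares $d_i^S\circ\tilde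 m=m\circ p_i$ ($i=0,1$), where $\tilde m\colon U\times U\to S$ is the induced morphism, are pullbacks. A split epimorphism $(f,s)\colon X\rightleftarrows Y$ is strongly split when for every morphism $y\colon\bar Y\to Y$, with $x\colon\bar Y\times_YX\to X$ the pullback projection, the pair $(x,s)$ is jointly extremally epic; $\mathbb{E}$ is $\Sigma$-protomodular when every split epimorphism in $\Sigma$ is strongly split. *)

(* Defs.v *)
Set Implicit Arguments.
Unset Strict Implicit.

Record Category := {
  Ob :> Type;
  Hom : Ob -> Ob -> Type;
  idm : forall X : Ob, Hom X X;
  comp : forall X Y Z : Ob, Hom Y Z -> Hom X Y -> Hom X Z;
  comp_assoc : forall (W X Y Z : Ob) (h : Hom Y Z) (g : Hom X Y) (f : Hom W X),
      comp h (comp g f) = comp (comp h g) f;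
  comp_id_l : forall (X Y : Ob) (f : Hom X Y), comp (idm Y) f = f;
  comp_id_r : forall (X Y : Ob) (f : Hom X Y), comp f (idm X) = f
}.

Arguments idm {c} X.
Arguments comp {c X Y Z} _ _.
Arguments Hom {c} _ _.
Notation "g \o f" := (comp g f) (at level 40, left associativity).

Section Cat.
Variable C : Category.

Definition is_mono {U X : C} (m : Hom U X) : Prop :=
  forall (T : C) (a b : Hom T U), m \o a = m \o b -> a = b.

Definition is_iso {X Y : C} (f : Hom X Y) : Prop :=
  exists g : Hom Y X, g \o f = idm X /\ f \o g = idm Y.

Definition is_terminal (T : C) : Prop :=
  forall X : C, exists f : Hom X T, forall g : Hom X T, g = f.

Definition is_pullback {X Y Z P : C} (f : Hom X Z) (g : Hom Y Z)
    (p1 : Hom P X) (p2 : Hom P Y) : Prop :=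
  f \o p1 = g \o p2 /\
  forall (Q : C) (q1 : Hom Q X) (q2 : Hom Q Y), f \o q1 = g \o q2 ->
    exists u : Hom Q P, p1 \o u = q1 /\ p2 \o u = q2 /\
      forall v : Hom Q P, p1 \o v = q1 -> p2 \o v = q2 -> v = u.

Definition is_product {X Y P : C} (p0 : Hom P X) (p1 : Hom P Y) : Prop :=
  forall (Q : C) (q0 : Hom Q X) (q1 : Hom Q Y),
    exists u : Hom Q P, p0 \o u = q0 /\ p1 \o u = q1 /\
      forall v : Hom Q P, p0 \o v = q0 -> p1 \o v = q1 -> v = u.

Definition finitely_complete : Prop :=
  (exists T : C, is_terminal T) /\
  (forall (X Y Z : C) (f : Hom X Z) (g : Hom Y Z),
     exists (P : C) (p1 : Hom P X) (p2 : Hom P Y), is_pullback f g p1 p2).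

Definition split_class (Sigma : forall X Y : C, Hom X Y -> Hom Y X -> Prop) : Prop :=
  forall (X Y : C) (f : Hom X Y) (s : Hom Y X), Sigma X Y f s -> f \o s = idm Y.

Definition fibrational (Sigma : forall X Y : C, Hom X Y -> Hom Y X -> Prop) : Prop :=
  (forall (X Y : C) (f : Hom X Y) (s : Hom Y X),
      f \o s = idm Y -> is_iso f -> Sigma X Y f s) /\
  (forall (X Y Y' X' : C) (f : Hom X Y) (s : Hom Y X) (h : Hom Y' Y)
          (f' : Hom X' Y') (h' : Hom X' X) (s' : Hom Y' X'),
      Sigma X Y f s ->
      is_pullback h f f' h' ->
      f' \o s' = idm Y' -> h' \o s' = s \o h ->
      Sigma X' Y' f' s').

Definition jointly_extremally_epic {A B Z : C} (a : Hom A Z) (b : Hom B Z) : Prop :=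
  forall (M : C) (m : Hom M Z), is_mono m ->
    (exists a' : Hom A M, m \o a' = a) ->
    (exists b' : Hom B M, m \o b' = b) ->
    is_iso m.

(* Sigma-Mal'tsev: X' = Y' x_Y X (pullback of f along g, projections
   f' : X' -> Y', g' : X' -> X), s' = (1, s g), tbar = (t f, 1). *)
Definition Sigma_Maltsev (Sigma : forall X Y : C, Hom X Y -> Hom Y X -> Prop) : Prop :=
  forall (X Y Y' X' : C) (f : Hom X Y) (s : Hom Y X) (g : Hom Y' Y) (t : Hom Y Y')
         (f' : Hom X' Y') (g' : Hom X' X) (s' : Hom Y' X') (tbar : Hom X X'),
    Sigma X Y f s ->
    g \o t = idm Y ->
    is_pullback g f f' g' ->
    f' \o s' = idm Y' -> g' \o s' = s \o g ->
    f' \o tbar = t \o f -> g' \o tbar = idm X ->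
    jointly_extremally_epic s' tbar.

Definition strongly_split {X Y : C} (f : Hom X Y) (s : Hom Y X) : Prop :=
  forall (Yb P : C) (y : Hom Yb Y) (p : Hom P Yb) (x : Hom P X),
    is_pullback y f p x -> jointly_extremally_epic x s.

Definition Sigma_protomodular (Sigma : forall X Y : C, Hom X Y -> Hom Y X -> Prop) : Prop :=
  forall (X Y : C) (f : Hom X Y) (s : Hom Y X), Sigma X Y f s -> strongly_split f s.

(* Relations on X: jointly monic pairs (d0, d1) : S -> X with a
   reflexivity s0.  Internal symmetry / transitivity are expressed on
   generalized elements (the usual representable definition). *)
Record relation (X : C) := {
  rel_ob : C;
  d0 : Hom rel_ob X;
  d1 : Hom rel_ob X;
  s0 : Hom X rel_ob
}.

Definition related {X : C} (S : relation X) {T : C} (a b : Hom T X) : Prop :=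
  exists h : Hom T (rel_ob S), d0 S \o h = a /\ d1 S \o h = b.

Definition is_reflexive_relation {X : C} (S : relation X) : Prop :=
  (forall (T : C) (h k : Hom T (rel_ob S)),
      d0 S \o h = d0 S \o k -> d1 S \o h = d1 S \o k -> h = k) /\
  d0 S \o s0 S = idm X /\ d1 S \o s0 S = idm X.

Definition is_equivalence_relation {X : C} (S : relation X) : Prop :=
  is_reflexive_relation S /\
  (forall (T : C) (a b : Hom T X), related S a b -> related S b a) /\
  (forall (T : C) (a b c : Hom T X),
      related S a b -> related S b c -> related S a c).

Definition Sigma_relation (Sigma : forall X Y : C, Hom X Y -> Hom Y X -> Prop)
    {X : C} (S : relation X) : Prop :=
  is_reflexive_relation S /\ Sigma _ _ (d0 S) (s0 S).

Definition Sigma_equivalence_relation (Sigma : forall X Y : C, Hom X Y -> Hom Y X -> Prop)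
    {X : C} (S : relation X) : Prop :=
  is_equivalence_relation S /\ Sigma_relation Sigma S.

(* U is Sigma-special: the kernel relation of U -> 1, i.e. U x U with its
   projections and the diagonal, is a Sigma-relation (for any choice of
   the product). *)
Definition Sigma_special (Sigma : forall X Y : C, Hom X Y -> Hom Y X -> Prop) (U : C) : Prop :=
  forall (P : C) (p0 p1 : Hom P U) (delta : Hom U P),
    is_product p0 p1 -> p0 \o delta = idm U -> p1 \o delta = idm U ->
    Sigma_relation Sigma (Build_relation p0 p1 delta).

(* m : U >-> X is normal to S: m^{-1}(S) is the indiscrete relation U x U,
   i.e. there is mt : U x U -> S with d_i mt = m p_i, and both squares
   d_i mt = m p_i are pullbacks. *)
Definition normal_to {U X : C} (m : Hom U X) (S : relation X) : Prop :=
  exists (P : C) (p0 p1 : Hom P U) (mt : Hom P (rel_ob S)),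
    is_product p0 p1 /\
    d0 S \o mt = m \o p0 /\ d1 S \o mt = m \o p1 /\
    is_pullback (d0 S) m mt p0 /\ is_pullback (d1 S) m mt p1.

Definition same_relation {X : C} (S S' : relation X) : Prop :=
  exists phi : Hom (rel_ob S) (rel_ob S'),
    is_iso phi /\ d0 S' \o phi = d0 S /\ d1 S' \o phi = d1 S.

End Cat.

(* Main.v *)
Require Import Defs.

Section S.
Variable C : Category.

Ltac nrm := repeat rewrite comp_assoc; repeat rewrite comp_id_l; repeat rewrite comp_id_r.

Lemma pb_sym {X Y Z P : C} {f : Hom X Z} {g : Hom Y Z} {p1 : Hom P X} {p2 : Hom P Y} :
  is_pullback f g p1 p2 -> is_pullback g f p2 p1.
Proof.
  intros [E H]; split; [now symmetry|].
  intros Q q1 q2 Eq. destruct (H Q q2 q1 (eq_sym Eq)) as [u [H1 [H2 H3]]].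
  exists u; split; [|split]; auto.
Qed.

Lemma prod_eta {X Y P Q : C} {p0 : Hom P X} {p1 : Hom P Y} {u v : Hom Q P} :
  is_product p0 p1 -> p0 \o u = p0 \o v -> p1 \o u = p1 \o v -> u = v.
Proof.
  intros H E0 E1. destruct (H Q (p0 \o u) (p1 \o u)) as [w [_ [_ Hw]]].
  rewrite (Hw u eq_refl eq_refl). symmetry. apply Hw; auto.
Qed.

Lemma rel_eta {X Q : C} {S : relation X} {h k : Hom Q (rel_ob S)} :
  is_reflexive_relation S -> d0 S \o h = d0 S \o k -> d1 S \o h = d1 S \o k -> h = k.
Proof. intros [H _]; apply H. Qed.

Lemma part1 (Sigma : forall X Y : C, Hom X Y -> Hom Y X -> Prop)
  (fib : fibrational Sigma) (U X : C) (m : Hom U X) (S : relation X) :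
  is_reflexive_relation S -> Sigma _ _ (d0 S) (s0 S) -> normal_to m S -> Sigma_special Sigma U.
Proof.
  intros HS HSig [P' [q0 [q1 [mt [Hprod [E0 [E1 [Pb0 Pb1]]]]]]]].
  intros P p0 p1 delta HP Hd0 Hd1. split.
  - split; [|split; assumption]. simpl. intros T h k e0 e1. exact (prod_eta HP e0 e1).
  - simpl. destruct fib as [_ fib].
    destruct (Hprod U (idm U) (idm U)) as [dl [Dl0 [Dl1 _]]].
    assert (A : Sigma P' U q0 dl).
    { apply (fib _ _ _ _ (d0 S) (s0 S) m q0 mt dl HSig (pb_sym Pb0) Dl0).
      apply rel_eta; auto.
      - nrm. rewrite E0. rewrite <- comp_assoc, Dl0. destruct HS as [_ [H0 _]]. rewrite H0. nrm. reflexivity.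
      - nrm. rewrite E1. rewrite <- comp_assoc, Dl1. destruct HS as [_ [_ H1]]. rewrite H1. nrm. reflexivity. }
    destruct (Hprod P p0 p1) as [phi [F0 [F1 _]]].
    destruct (HP P' q0 q1) as [psi [G0 [G1 _]]].
    assert (PP : phi \o psi = idm P').
    { apply (prod_eta Hprod); nrm; [rewrite F0; exact G0 | rewrite F1; exact G1]. }
    apply (fib _ _ _ _ q0 dl (idm U) p0 phi delta A); auto.
    + split; [nrm; auto|].
      intros Q r1 r2 Er. exists (psi \o r2). split; [|split].
      * nrm. rewrite G0. rewrite <- Er. nrm. reflexivity.
      * nrm. rewrite PP. nrm. reflexivity.
      * intros v V0 V1. apply (prod_eta HP).
        -- rewrite V0. nrm. rewrite G0. rewrite <- Er. nrm. reflexivity.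
        -- transitivity (q1 \o r2); [rewrite <- V1; nrm; now rewrite F1 | nrm; now rewrite G1].
    + nrm. apply (prod_eta Hprod); nrm.
      * rewrite F0, Hd0, Dl0. reflexivity.
      * rewrite F1, Hd1, Dl1. reflexivity.
Qed.

Lemma incl (Sigma : forall X Y : C, Hom X Y -> Hom Y X -> Prop)
  (fc : finitely_complete C) (prot : Sigma_protomodular Sigma)
  (U X : C) (m : Hom U X) (S S' : relation X) :
  is_reflexive_relation S -> Sigma _ _ (d0 S) (s0 S) -> is_reflexive_relation S' ->
  normal_to m S -> normal_to m S' ->
  exists phi : Hom (rel_ob S) (rel_ob S'), d0 S' \o phi = d0 S /\ d1 S' \o phi = d1 S.
Proof.
  intros HS HSig HS' [P [p0 [p1 [mt [HP [E0 [E1 [Pb0 _]]]]]]]]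
    [P' [q0 [q1 [mt' [HP' [E0' [E1' _]]]]]]].
  destruct fc as [[T HT] Hpb].
  destruct (HT X) as [tX HtX].
  destruct (Hpb _ _ _ tX tX) as [XX [pi0 [pi1 [_ Hxx]]]].
  assert (Pair : forall (Q : C) (a b : Hom Q X), exists u : Hom Q XX, pi0 \o u = a /\ pi1 \o u = b).
  { intros Q a b. destruct (HT Q) as [tQ HtQ].
    destruct (Hxx Q a b) as [u [U0 [U1 _]]].
    - rewrite (HtQ (tX \o a)), (HtQ (tX \o b)). reflexivity.
    - exists u; auto. }
  assert (Eta : forall (Q : C) (u v : Hom Q XX), pi0 \o u = pi0 \o v -> pi1 \o u = pi1 \o v -> u = v).
  { intros Q u v e0 e1. destruct (HT Q) as [tQ HtQ].
    destruct (Hxx Q (pi0 \o u) (pi1 \o u)) as [w [_ [_ Hw]]].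
    - rewrite (HtQ (tX \o (pi0 \o u))), (HtQ (tX \o (pi1 \o u))). reflexivity.
    - rewrite (Hw u eq_refl eq_refl). symmetry. apply Hw; auto. }
  destruct (Pair _ (d0 S) (d1 S)) as [e [e0 e1]].
  destruct (Pair _ (d0 S') (d1 S')) as [e' [e0' e1']].
  destruct (Hpb _ _ _ e e') as [I [a [b [Eab HI]]]].
  assert (A0 : d0 S \o a = d0 S' \o b).
  { rewrite <- e0, <- e0'. rewrite <- !comp_assoc. now rewrite Eab. }
  assert (A1 : d1 S \o a = d1 S' \o b).
  { rewrite <- e1, <- e1'. rewrite <- !comp_assoc. now rewrite Eab. }
  assert (Fact : forall (Q : C) (x : Hom Q (rel_ob S)) (y : Hom Q (rel_ob S')),
            d0 S \o x = d0 S' \o y -> d1 S \o x = d1 S' \o y -> exists u, a \o u = x).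
  { intros Q x y H0 H1. destruct (HI Q x y) as [u [U0 _]].
    - apply Eta; nrm; rewrite ?e0, ?e0', ?e1, ?e1'; auto.
    - exists u; exact U0. }
  assert (Mono : is_mono a).
  { intros Q h k Hhk.
    assert (Hb : b \o h = b \o k).
    { apply (rel_eta HS').
      - nrm. rewrite <- A0. rewrite <- !comp_assoc. now rewrite Hhk.
      - nrm. rewrite <- A1. rewrite <- !comp_assoc. now rewrite Hhk. }
    destruct (HI Q (a \o h) (b \o h)) as [u [_ [_ Hu]]].
    - rewrite !comp_assoc. now rewrite Eab.
    - rewrite (Hu h eq_refl eq_refl). symmetry. apply Hu; auto. }
  destruct (HP' P p0 p1) as [psi [Ps0 [Ps1 _]]].
  assert (Jee := prot _ _ _ _ HSig U P m p0 mt (pb_sym Pb0)).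
  destruct (Jee I a Mono) as [ai [Ai1 Ai2]].
  - apply (Fact _ mt (mt' \o psi)); nrm.
    + rewrite E0, E0'. rewrite <- comp_assoc, Ps0. reflexivity.
    + rewrite E1, E1'. rewrite <- comp_assoc, Ps1. reflexivity.
  - apply (Fact _ (s0 S) (s0 S')).
    + destruct HS as [_ [H _]]. destruct HS' as [_ [H' _]]. now rewrite H, H'.
    + destruct HS as [_ [_ H]]. destruct HS' as [_ [_ H']]. now rewrite H, H'.
  - exists (b \o ai). split; nrm.
    + rewrite <- A0. rewrite <- comp_assoc, Ai2. nrm. reflexivity.
    + rewrite <- A1. rewrite <- comp_assoc, Ai2. nrm. reflexivity.
Qed.
End S.

Theorem proposition8p5 (C : Category)
  (Sigma : forall X Y : C, Hom X Y -> Hom Y X -> Prop) :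
  finitely_complete C ->
  split_class Sigma ->
  fibrational Sigma ->
  Sigma_Maltsev Sigma ->
  (forall (U X : C) (m : Hom U X) (S : relation X),
      is_mono m ->
      Sigma_equivalence_relation Sigma S ->
      normal_to m S ->
      Sigma_special Sigma U) /\
  (Sigma_protomodular Sigma ->
   forall (U X : C) (m : Hom U X) (S S' : relation X),
      is_mono m ->
      Sigma_equivalence_relation Sigma S ->
      Sigma_equivalence_relation Sigma S' ->
      normal_to m S -> normal_to m S' ->
      same_relation S S').
Proof.
  intros fc _ fib _. split.
  - intros U X m S _ [_ [HS HSig]] N. exact (@part1 _ _ fib _ _ _ _ HS HSig N).
  - intros prot U X m S S' _ [_ [HS HSig]] [_ [HS' HSig']] N N'.
    destruct (@incl _ _ fc prot _ _ _ _ _ HS HSig HS' N N') as [phi [P0 P1]].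
    destruct (@incl _ _ fc prot _ _ _ _ _ HS' HSig' HS N' N) as [psi [Q0 Q1]].
    exists phi. split; [|split; assumption].
    exists psi. split.
    + apply (@rel_eta _ _ _ S); [exact HS|..]; rewrite comp_id_r, comp_assoc; [rewrite Q0 | rewrite Q1]; auto.
    + apply (@rel_eta _ _ _ S'); [exact HS'|..]; rewrite comp_id_r, comp_assoc; [rewrite P0 | rewrite P1]; auto.
Qed.
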